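(* As $N\to\infty$, $$\min\Big\{\big\|\sqrt m-\sqrt n\big\| : 1\le m,n\le N,\ m\ne n,\ \sqrt m\notin\mathbb{Z},\ \sqrt n\notin\mathbb{Z}\Big\}\sim\frac{1}{2N^{3/2}}.$$
   Context: For $x\in\mathbb{R}$, $\|x\|=\min_{k\in\mathbb{Z}}|x-k|$ denotes the distance to the nearest integer. $f(N)\sim g(N)$ means $f(N)/g(N)\to1$. *)

(* Defs.v *)
From Stdlib Require Import Reals List ClassicalDescription.
From Coquelicot Require Import Coquelicot.
Import ListNotations.
Open Scope R_scope.

(* ||x|| = min_{k in Z} |x - k|: the minimum is attained at floor x or floor x + 1
   (Int_part x is the floor of x). *)
Definition distZ (x : R) : R :=
  Rmin (Rabs (x - IZR (Int_part x))) (Rabs (x - IZR (Int_part x + 1))).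

Definition notZ (x : R) : Prop := forall k : Z, x <> IZR k.

(* admissible pair (m,n) with 1 <= m,n <= N is enforced by ranging over seq 1 N *)
Definition adm (m n : nat) : Prop :=
  m <> n /\ notZ (sqrt (INR m)) /\ notZ (sqrt (INR n)).

Definition vals (N : nat) : list R :=
  flat_map (fun m =>
    flat_map (fun n =>
      if excluded_middle_informative (adm m n)
      then [distZ (sqrt (INR m) - sqrt (INR n))] else [])
    (seq 1 N))
  (seq 1 N).

(* the minimum of that (finite) set; the value 0 for an empty set (N <= 2) is
   irrelevant for the asymptotic statement *)
Definition delta (N : nat) : R :=
  match vals N with
  | [] => 0
  | x :: l => fold_right Rmin x l
  end.

(* Main.v *)
Require Import Defs.
From Stdlib Require Import Reals Lia Lra Psatz ZArith List ClassicalDescription.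
From Coquelicot Require Import Coquelicot.
Import ListNotations.
Open Scope R_scope.

Module DescentMod.
Local Open Scope Z_scope.

Lemma descent : forall k : nat, forall n a b : Z, Z.of_nat k = a -> 0 < a -> b*b = n*a*a -> exists r, 0 <= r /\ n = r*r.
Proof.
  intro k. induction k as [k IH] using (well_founded_induction lt_wf).
  intros n a b Hk Ha Hb.
  assert (Hn : 0 <= n) by nia.
  destruct (Z.sqrt_spec n Hn) as [H1 H2].
  set (r := Z.sqrt n) in *.
  assert (Hr : 0 <= r) by (apply Z.sqrt_nonneg).
  destruct (Z.eq_dec n (r*r)) as [E|E]. { exists r; auto. }
  set (c := Z.abs b).
  assert (Hc : c*c = n*a*a) by (unfold c; nia).
  assert (Hc0 : 0 <= c) by (unfold c; lia).
  assert (Hlt1 : r*a < c).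
  { assert (r*r < n) by lia.
    destruct (Z_lt_le_dec (r*a) c) as [h|h]; auto.
    assert (c*c <= (r*a)*(r*a)) by nia. nia. }
  assert (Hlt2 : c < (r+1)*a).
  { destruct (Z_lt_le_dec c ((r+1)*a)) as [h|h]; auto.
    assert ((r+1)*a*((r+1)*a) <= c*c) by nia. unfold Z.succ in H2. nia. }
  apply (IH (Z.to_nat (c - r*a)) ltac:(lia) n (c - r*a) (n*a - r*c)); try lia.
  nia.
Qed.

End DescentMod.
Import DescentMod.

Lemma sqrt_nat_sq (n : nat) (j L : Z) : (j <> 0)%Z -> (2 * IZR j * sqrt (INR n) = IZR L)%R ->
  ~ notZ (sqrt (INR n)).
Proof.
  intros Hj H.
  assert (Hs : sqrt (INR n) * sqrt (INR n) = INR n) by (apply sqrt_sqrt; apply pos_INR).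
  assert (HZ0 : (L*L = Z.of_nat n * (2*j) * (2*j))%Z).
  { apply eq_IZR. rewrite !mult_IZR, <- INR_IZR_INZ, <- H.
    replace (IZR 2) with 2 by reflexivity. set (y := sqrt (INR n)) in *. rewrite <- Hs. ring. }
  assert (HZ : (L*L = Z.of_nat n * Z.abs (2*j) * Z.abs (2*j))%Z).
  { rewrite HZ0. destruct (Z.abs_spec (2*j)) as [[_ E]|[_ E]]; rewrite E; ring. }
  destruct (descent (Z.to_nat (Z.abs (2*j))) (Z.of_nat n) (Z.abs (2*j)) L ltac:(lia) ltac:(lia) HZ) as [r [Hr E]].
  intro Hn. apply (Hn r).
  rewrite INR_IZR_INZ, E, mult_IZR. apply sqrt_square. apply IZR_le. lia.
Qed.

Lemma no_rel (m n : nat) (j : Z) (e : R) : (1 <= m)%nat -> (1 <= n)%nat -> m <> n ->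
  notZ (sqrt (INR n)) -> (e = 1 \/ e = -1) ->
  sqrt (INR m) = e * sqrt (INR n) + IZR j -> False.
Proof.
  intros Hm Hn Hmn HnZ He H.
  assert (Hsm : sqrt (INR m) * sqrt (INR m) = INR m) by (apply sqrt_sqrt; apply pos_INR).
  assert (Hsn : sqrt (INR n) * sqrt (INR n) = INR n) by (apply sqrt_sqrt; apply pos_INR).
  assert (Pm : 0 < sqrt (INR m)) by (apply sqrt_lt_R0; apply lt_0_INR; lia).
  assert (Pn : 0 < sqrt (INR n)) by (apply sqrt_lt_R0; apply lt_0_INR; lia).
  set (x := sqrt (INR m)) in *. set (y := sqrt (INR n)) in *.
  destruct (Z.eq_dec j 0) as [J|J].
  - subst j. rewrite Rplus_0_r in H. destruct He as [He|He]; subst e.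
    + apply Hmn. apply INR_eq. rewrite <- Hsm, <- Hsn, H. ring.
    + lra.
  - destruct He as [He|He]; subst e.
    + apply (sqrt_nat_sq n j (Z.of_nat m - Z.of_nat n - j*j)%Z J) ; auto.
      change (sqrt (INR n)) with y. rewrite !minus_IZR, mult_IZR, <- !INR_IZR_INZ, <- Hsm, <- Hsn, H. ring.
    + apply (sqrt_nat_sq n (-j) (Z.of_nat m - Z.of_nat n - j*j)%Z ltac:(lia)) ; auto.
      change (sqrt (INR n)) with y. rewrite !minus_IZR, opp_IZR, mult_IZR, <- !INR_IZR_INZ, <- Hsm, <- Hsn, H. ring.
Qed.

Lemma distZ_near (z : R) : exists k : Z, distZ z = Rabs (z - IZR k) /\ Rabs (z - IZR k) <= 1/2.
Proof.
  destruct (base_Int_part z) as [H1 H2]. unfold distZ.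
  rewrite plus_IZR.
  rewrite (Rabs_right (z - IZR (Int_part z))) by lra.
  rewrite (Rabs_left1 (z - (IZR (Int_part z) + 1))) by lra.
  destruct (Rle_dec (z - IZR (Int_part z)) (- (z - (IZR (Int_part z) + 1)))) as [h|h].
  - exists (Int_part z). rewrite Rmin_left by lra. rewrite Rabs_right; lra.
  - exists (Int_part z + 1)%Z. rewrite Rmin_right by lra. rewrite plus_IZR, Rabs_left1; lra.
Qed.

Lemma distZ_le (z : R) (k : Z) : distZ z <= Rabs (z - IZR k).
Proof.
  destruct (base_Int_part z) as [H1 H2]. unfold distZ. rewrite plus_IZR.
  destruct (Z_le_gt_dec k (Int_part z)) as [h|h].
  - apply IZR_le in h. eapply Rle_trans. apply Rmin_l.
    rewrite !Rabs_right; lra.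
  - assert (h' : (Int_part z + 1 <= k)%Z) by lia. apply IZR_le in h'. rewrite plus_IZR in h'.
    eapply Rle_trans. apply Rmin_r. rewrite !Rabs_left1; lra.
Qed.

Lemma distZ_ge0 z : 0 <= distZ z.
Proof. unfold distZ. apply Rmin_glb; apply Rabs_pos. Qed.

Lemma lower (N m n : nat) : (1 <= m <= N)%nat -> (1 <= n <= N)%nat -> adm m n ->
  1 <= distZ (sqrt (INR m) - sqrt (INR n)) *
       ((2 * sqrt (INR N) + 1/2) * ((sqrt (INR N) + 1/2) * (sqrt (INR N) + 1/2))).
Proof.
  intros Hm Hn [Hmn [HmZ HnZ]].
  assert (Hsm : sqrt (INR m) * sqrt (INR m) = INR m) by (apply sqrt_sqrt; apply pos_INR).
  assert (Hsn : sqrt (INR n) * sqrt (INR n) = INR n) by (apply sqrt_sqrt; apply pos_INR).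
  assert (Pm : 0 < sqrt (INR m)) by (apply sqrt_lt_R0; apply lt_0_INR; lia).
  assert (Pn : 0 < sqrt (INR n)) by (apply sqrt_lt_R0; apply lt_0_INR; lia).
  assert (Lm : sqrt (INR m) <= sqrt (INR N)) by (apply sqrt_le_1_alt; apply le_INR; lia).
  assert (Ln : sqrt (INR n) <= sqrt (INR N)) by (apply sqrt_le_1_alt; apply le_INR; lia).
  destruct (distZ_near (sqrt (INR m) - sqrt (INR n))) as [k [Ek Hk]].
  rewrite Ek.
  assert (NR : forall j e, (e = 1 \/ e = -1) -> sqrt (INR m) = e * sqrt (INR n) + IZR j -> False).
  { intros j e He Hj. exact (no_rel m n j e ltac:(lia) ltac:(lia) Hmn HnZ He Hj). }
  set (x := sqrt (INR m)) in *. set (y := sqrt (INR n)) in *. set (s := sqrt (INR N)) in *.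
  set (d := x - y - IZR k) in *.
  set (P := ((Z.of_nat m + k*k - Z.of_nat n) * (Z.of_nat m + k*k - Z.of_nat n) - 4*k*k*Z.of_nat m)%Z).
  assert (EP : IZR P = d * ((x + y - IZR k) * (x + y + IZR k) * (x - y + IZR k))).
  { unfold P, d. rewrite ?minus_IZR, ?mult_IZR, ?plus_IZR, ?minus_IZR, ?mult_IZR, ?plus_IZR, <- !INR_IZR_INZ, <- Hsm, <- Hsn.
    replace (IZR 4) with 4 by reflexivity. rewrite ?mult_IZR. ring. }
  assert (P0 : P <> 0%Z).
  { intro h. rewrite h in EP. symmetry in EP.
    destruct (Rmult_integral _ _ EP) as [h1|h1].
    { apply (NR k 1); [lra|]. unfold d in h1. lra. }
    destruct (Rmult_integral _ _ h1) as [h2|h2].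
    destruct (Rmult_integral _ _ h2) as [h3|h3].
    { apply (NR k (-1)); lra. }
    { apply (NR (-k)%Z (-1)); [lra|]. rewrite opp_IZR. lra. }
    { apply (NR (-k)%Z 1); [lra|]. rewrite opp_IZR. lra. } }
  assert (AP : 1 <= Rabs (IZR P)).
  { rewrite <- abs_IZR. apply IZR_le. lia. }
  rewrite EP, !Rabs_mult in AP.
  assert (HA : Rabs (x + y - IZR k) <= 2*y + 1/2).
  { replace (x + y - IZR k) with (2*y + d) by (unfold d; ring).
    apply Rabs_le. pose proof (Rle_abs d); pose proof (Rle_abs (-d)); rewrite Rabs_Ropp in *. lra. }
  assert (HB : Rabs (x + y + IZR k) <= 2*x + 1/2).
  { replace (x + y + IZR k) with (2*x - d) by (unfold d; ring).
    apply Rabs_le. pose proof (Rle_abs d); pose proof (Rle_abs (-d)); rewrite Rabs_Ropp in *. lra. }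
  assert (HC : Rabs (x - y + IZR k) <= 2*Rabs (x - y) + 1/2).
  { replace (x - y + IZR k) with (2*(x - y) - d) by (unfold d; ring).
    eapply Rle_trans. apply Rabs_triang. rewrite Rabs_Ropp, Rabs_mult, Rabs_right by lra. lra. }
  assert (Hprod : (2*y + 1/2) * (2*x + 1/2) * (2*Rabs (x - y) + 1/2) <=
                  (2 * s + 1/2) * ((s + 1/2) * (s + 1/2))).
  { destruct (Rle_dec y x) as [h|h].
    - rewrite Rabs_right by lra.
      assert (Q1 : (2*y + 1/2) * (2*(x-y) + 1/2) <= (x + 1/2) * (x + 1/2)) by (pose proof (Rle_0_sqr (2*y - x)); unfold Rsqr in *; nra).
      assert (Q2 : (x + 1/2) * (x + 1/2) <= (s + 1/2) * (s + 1/2)) by nra.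
      assert (Q3 : (2*x + 1/2) * ((x + 1/2) * (x + 1/2)) <= (2 * s + 1/2) * ((s + 1/2) * (s + 1/2))).
      { apply Rmult_le_compat; nra. }
      nra.
    - rewrite Rabs_left by lra.
      assert (Q1 : (2*x + 1/2) * (2*(-(x-y)) + 1/2) <= (y + 1/2) * (y + 1/2)) by (pose proof (Rle_0_sqr (2*x - y)); unfold Rsqr in *; nra).
      assert (Q2 : (y + 1/2) * (y + 1/2) <= (s + 1/2) * (s + 1/2)) by nra.
      assert (Q3 : (2*y + 1/2) * ((y + 1/2) * (y + 1/2)) <= (2 * s + 1/2) * ((s + 1/2) * (s + 1/2))).
      { apply Rmult_le_compat; nra. }
      nra. }
  assert (Hd : 0 <= Rabs d) by apply Rabs_pos.
  assert (T : Rabs (x + y - IZR k) * Rabs (x + y + IZR k) * Rabs (x - y + IZR k) <=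
              (2 * s + 1/2) * ((s + 1/2) * (s + 1/2))).
  { eapply Rle_trans; [|exact Hprod].
    apply Rmult_le_compat; try apply Rmult_le_pos; try apply Rabs_pos; auto.
    apply Rmult_le_compat; try apply Rabs_pos; auto. }
  apply Rle_trans with (1 := AP). apply Rmult_le_compat_l; auto.
Qed.

Lemma fold_min (x : R) (l : list R) :
  In (fold_right Rmin x l) (x :: l) /\ forall v, In v (x :: l) -> fold_right Rmin x l <= v.
Proof.
  induction l as [|y l [IH1 IH2]].
  - split; [simpl; auto|]. intros v [<-|[]]. simpl; lra.
  - change (fold_right Rmin x (y :: l)) with (Rmin y (fold_right Rmin x l)). split.
    + destruct (Rle_dec y (fold_right Rmin x l)) as [h|h].
      * rewrite Rmin_left by lra. simpl; auto.
      * rewrite Rmin_right by lra. destruct IH1 as [h1|h1]; simpl; auto.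
    + intros v Hv. destruct Hv as [Hv|Hv]; [|destruct Hv as [Hv|Hv]].
      * subst. eapply Rle_trans. apply Rmin_r. apply IH2. simpl; auto.
      * subst. apply Rmin_l.
      * eapply Rle_trans. apply Rmin_r. apply IH2. simpl; auto.
Qed.

Lemma vals_In N m n : (1 <= m <= N)%nat -> (1 <= n <= N)%nat -> adm m n ->
  In (distZ (sqrt (INR m) - sqrt (INR n))) (vals N).
Proof.
  intros Hm Hn Ha. unfold vals. apply in_flat_map. exists m. split.
  apply in_seq. lia. apply in_flat_map. exists n. split. apply in_seq. lia.
  destruct (excluded_middle_informative (adm m n)) as [_|h]; [left; auto| contradiction].
Qed.

Lemma In_vals N v : In v (vals N) -> exists m n, (1 <= m <= N)%nat /\ (1 <= n <= N)%nat /\ adm m n /\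
  v = distZ (sqrt (INR m) - sqrt (INR n)).
Proof.
  unfold vals. intro H. apply in_flat_map in H. destruct H as [m [Hm H]].
  apply in_flat_map in H. destruct H as [n [Hn H]].
  apply in_seq in Hm. apply in_seq in Hn.
  destruct (excluded_middle_informative (adm m n)) as [h|h]; [|destruct H].
  destruct H as [H|[]]. exists m, n. repeat split; try lia; auto; destruct h as [? [? ?]]; auto.
Qed.

Lemma delta_spec N : vals N <> [] -> In (delta N) (vals N) /\ forall v, In v (vals N) -> delta N <= v.
Proof.
  unfold delta. destruct (vals N) as [|x l]; [tauto|]. intros _. apply fold_min.
Qed.

Lemma nsq (q : nat) (a : nat) : (a*a < q < (a+1)*(a+1))%nat -> notZ (sqrt (INR q)).
Proof.
  intros H k E.
  assert (Hk : 0 <= IZR k) by (rewrite <- E; apply sqrt_pos).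
  apply le_IZR in Hk.
  assert (E2 : INR q = IZR k * IZR k) by (rewrite <- E; rewrite sqrt_sqrt; auto using pos_INR).
  rewrite INR_IZR_INZ, <- mult_IZR in E2. apply eq_IZR in E2.
  assert (H' : (Z.of_nat a * Z.of_nat a < Z.of_nat q < (Z.of_nat a + 1) * (Z.of_nat a + 1))%Z) by nia.
  destruct (Z_le_gt_dec k (Z.of_nat a)); nia.
Qed.

Lemma upper (a : nat) : (1 <= a)%nat ->
  adm (4*a*a + 2) (a*a + 1) /\
  distZ (sqrt (INR (4*a*a+2)) - sqrt (INR (a*a+1))) <= 1 / (4 * INR a * INR a * (4 * INR a - 1)).
Proof.
  intro Ha. split.
  { split; [lia|]. split.
    - apply (nsq _ (2*a)). nia.
    - apply (nsq _ a). nia. }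
  assert (Hsm : sqrt (INR (4*a*a+2)) * sqrt (INR (4*a*a+2)) = INR (4*a*a+2)) by (apply sqrt_sqrt; apply pos_INR).
  assert (Hsn : sqrt (INR (a*a+1)) * sqrt (INR (a*a+1)) = INR (a*a+1)) by (apply sqrt_sqrt; apply pos_INR).
  assert (Pm : 0 <= sqrt (INR (4*a*a+2))) by apply sqrt_pos.
  assert (Pn : 0 <= sqrt (INR (a*a+1))) by apply sqrt_pos.
  set (x := sqrt (INR (4*a*a+2))) in *. set (y := sqrt (INR (a*a+1))) in *.
  rewrite plus_INR in Hsm, Hsn. repeat rewrite mult_INR in Hsm. repeat rewrite mult_INR in Hsn.
  replace (INR 4) with 4 in Hsm by (simpl; ring).
  replace (INR 2) with 2 in Hsm by (simpl; ring).
  replace (INR 1) with 1 in Hsn by (simpl; ring).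
  assert (HA : 1 <= INR a) by (apply (le_INR 1); lia).
  clearbody x y. remember (INR a) as r eqn:Er.
  assert (Hx : 2*r <= x) by nra.
  assert (Hy1 : r <= y) by nra.
  assert (Hy2 : y <= r + 1/2) by nra.
  pose proof (distZ_le (x - y) (Z.of_nat a)) as D.
  rewrite <- INR_IZR_INZ, <- Er in D.
  set (dd := x - y - r) in *.
  assert (E : dd * ((x + y - r) * (x + y + r) * (x - y + r)) = 1).
  { unfold dd. replace 1 with ((4 * r * r + 2 + r*r - (r*r+1)) * (4 * r * r + 2 + r*r - (r*r+1)) - 4*r*r*(4 * r * r + 2)) by ring.
    rewrite <- Hsm, <- Hsn. ring. }
  assert (Hprod : 4 * r * r * (4 * r - 1) <= (x + y - r) * (x + y + r) * (x - y + r)).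
  { assert (2*r <= x + y - r) by lra. assert (4*r <= x + y + r) by lra.
    assert (2*r - 1/2 <= x - y + r) by lra.
    replace (4 * r * r * (4 * r - 1)) with ((2*r) * (4*r) * (2*r - 1/2)) by field.
    apply Rmult_le_compat; try nra. }
  assert (Pos : 0 < 4 * r * r * (4 * r - 1)) by nra.
  assert (ddpos : 0 < dd) by nra.
  eapply Rle_trans; [exact D|]. rewrite Rabs_right by lra.
  apply (Rmult_le_reg_r (4 * r * r * (4 * r - 1))); auto.
  unfold Rdiv. rewrite Rmult_1_l, Rinv_l by lra. nra.
Qed.

Definition tt (N : nat) : R := sqrt (/ INR N).
Definition FL (t : R) : R := 2 / ((2 + t/2) * ((1 + t/2) * (1 + t/2))).
Definition FU (t : R) : R := 2 / ((1 - 4*t) * (1 - 4*t) * (2 - 9*t)).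

Lemma tt_lim : is_lim_seq tt 0.
Proof.
  unfold tt. rewrite <- sqrt_0.
  apply is_lim_seq_continuous. apply continuity_pt_sqrt; lra.
  replace (Finite 0) with (Rbar_inv p_infty) by reflexivity.
  apply is_lim_seq_inv. apply is_lim_seq_INR. discriminate.
Qed.

Lemma FL_lim : is_lim_seq (fun N => FL (tt N)) 1.
Proof.
  replace 1 with (FL 0) by (unfold FL; field).
  apply is_lim_seq_continuous. unfold FL. reg. lra. apply tt_lim.
Qed.

Lemma FU_lim : is_lim_seq (fun N => FU (tt N)) 1.
Proof.
  replace 1 with (FU 0) by (unfold FU; field).
  apply is_lim_seq_continuous. unfold FU. reg. lra. apply tt_lim.
Qed.

Lemma bounds (N : nat) : (100 <= N)%nat ->
  FL (tt N) <= delta N / (1 / (2 * Rpower (INR N) (3 / 2))) <= FU (tt N).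
Proof.
  intro HN.
  assert (HN' : 100 <= INR N) by (apply (le_INR 100) in HN; simpl in HN; lra).
  set (s := sqrt (INR N)).
  assert (Hss : s * s = INR N) by (apply sqrt_sqrt; lra).
  assert (Hs10 : 10 <= s).
  { unfold s. rewrite <- sqrt_square with (x := 10) by lra. apply sqrt_le_1_alt. lra. }
  assert (Ett : tt N = / s) by (unfold tt, s; apply sqrt_inv).
  assert (Erat : delta N / (1 / (2 * Rpower (INR N) (3 / 2))) = delta N * (2 * (s * s * s))).
  { replace (3/2) with (1 + /2) by field.
    rewrite Rpower_plus, Rpower_1, Rpower_sqrt by lra. fold s. rewrite <- Hss at 1. field.
    lra. }
  rewrite Erat, Ett.
  set (r := Nat.sqrt N).
  destruct (Nat.sqrt_spec N ltac:(lia)) as [Hr1 Hr2]. fold r in Hr1, Hr2.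
  assert (Hr10 : (10 <= r)%nat) by (destruct (Nat.le_gt_cases 10 r); [auto|nia]).
  set (a := (r / 2 - 1)%nat).
  assert (Hdm := Nat.div_mod r 2 ltac:(lia)). assert (Hmd := Nat.mod_upper_bound r 2 ltac:(lia)).
  assert (Ha1 : (4 <= a)%nat) by (unfold a; lia).
  assert (Ha2 : (4*a*a + 2 <= N)%nat).
  { assert (2 * a + 2 <= r)%nat by (unfold a; lia). nia. }
  assert (Ha3 : (r <= 2*a + 3)%nat) by (unfold a; lia).
  destruct (upper a ltac:(lia)) as [Hadm Hup].
  assert (Hin := vals_In N (4*a*a+2) (a*a+1) ltac:(lia) ltac:(nia) Hadm).
  assert (Hne : vals N <> []) by (intro h; rewrite h in Hin; destruct Hin).
  destruct (delta_spec N Hne) as [Hd1 Hd2].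
  assert (Hs3 : 0 < s * s * s) by nra.
  split.
  - destruct (In_vals N _ Hd1) as [m [n [Hm [Hn [Had Ed]]]]].
    pose proof (lower N m n Hm Hn Had) as L. rewrite <- Ed in L. fold s in L.
    unfold FL.
    set (M := (2 * s + 1 / 2) * ((s + 1 / 2) * (s + 1 / 2))) in *.
    assert (Mpos : 0 < M) by (unfold M; nra).
    replace (2 / ((2 + / s / 2) * ((1 + / s / 2) * (1 + / s / 2)))) with (2 * (s*s*s) / M)
      by (unfold M; field; nra).
    apply (Rmult_le_reg_r M); auto. unfold Rdiv. rewrite Rmult_assoc, Rinv_l by lra. nra.
  - assert (Hdl := Hd2 _ Hin).
    set (ra := INR a) in *.
    assert (Hra : s / 2 - 2 <= ra).
    { assert (INR r <= 2 * ra + 3) by (unfold ra; apply le_INR in Ha3; rewrite plus_INR, mult_INR in Ha3; simpl in Ha3; lra).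
      assert (s < INR r + 1).
      { unfold s. rewrite <- sqrt_square with (x := INR r + 1) by (pose proof (pos_INR r); lra).
        apply sqrt_lt_1_alt. split; [lra|]. apply lt_INR in Hr2.
        rewrite mult_INR, S_INR in Hr2. nra. }
      lra. }
    set (b := s / 2 - 2) in *.
    assert (Hb : 3 <= b) by (unfold b; lra).
    assert (Mon : 4 * b * b * (4 * b - 1) <= 4 * ra * ra * (4 * ra - 1)).
    { apply Rmult_le_compat; try nra. }
    assert (Eb : 4 * b * b * (4 * b - 1) = (s - 4) * (s - 4) * (2 * s - 9)) by (unfold b; field).
    unfold FU.
    replace (2 / ((1 - 4 * / s) * (1 - 4 * / s) * (2 - 9 * / s))) with (2 * (s*s*s) / (4 * b * b * (4 * b - 1)))
      by (rewrite Eb; field; repeat split; nra).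
    assert (Bpos : 0 < 4 * b * b * (4 * b - 1)) by nra.
    apply (Rmult_le_reg_r (4 * b * b * (4 * b - 1))); auto.
    replace (2 * (s*s*s) / (4 * b * b * (4 * b - 1)) * (4 * b * b * (4 * b - 1))) with (2*(s*s*s)) by (field; lra).
    assert (delta N * (4 * ra * ra * (4 * ra - 1)) <= 1).
    { eapply Rle_trans. apply Rmult_le_compat_r; [nra|exact Hdl].
      eapply Rle_trans. apply Rmult_le_compat_r; [nra|exact Hup]. right. field. nra. }
    assert (D0 : 0 <= delta N).
    { destruct (In_vals N _ Hd1) as [m [n [_ [_ [_ Ed]]]]]. rewrite Ed. apply distZ_ge0. }
    apply Rle_trans with (delta N * (2 * (s * s * s)) * (4 * ra * ra * (4 * ra - 1))).
    { apply Rmult_le_compat_l; nra. }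
    replace (delta N * (2 * (s * s * s)) * (4 * ra * ra * (4 * ra - 1))) with
      ((2 * (s * s * s)) * (delta N * (4 * ra * ra * (4 * ra - 1)))) by ring.
    rewrite <- (Rmult_1_r (2 * (s * s * s))) at 2.
    apply Rmult_le_compat_l; nra.
Qed.

Theorem theorem7 :
  is_lim_seq (fun N : nat => delta N / (1 / (2 * Rpower (INR N) (3 / 2)))) 1.
Proof.
  apply (is_lim_seq_le_le_loc (fun N => FL (tt N)) _ (fun N => FU (tt N))).
  - exists 100%nat. intros N HN. apply bounds. lia.
  - apply FL_lim.
  - apply FU_lim.
Qed.
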